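(* For $a,b>0$, $\lambda\ge0$ and $0<x<1$, $$e^{-\lambda}x^a(1-x)^b\sum_{n=0}^\infty\frac{\Gamma(a+b+n)}{\Gamma(b)\Gamma(a+1+n)}x^n\sum_{j=0}^n\frac{\lambda^j}{j!}=B_{a,b}(2\lambda,x).$$
   Context: For $p,q>0$ and $0\le y\le 1$, $I_y(p,q)=\frac{1}{B(p,q)}\int_0^y t^{p-1}(1-t)^{q-1}\,dt$ is the regularized incomplete beta function, with $B(p,q)=\Gamma(p)\Gamma(q)/\Gamma(p+q)$. The cumulative noncentral beta distribution is $B_{p,q}(x,y)=e^{-x/2}\sum_{j=0}^\infty \frac{1}{j!}\left(\frac x2\right)^j I_y(p+j,q)$ for $x\ge0$. *)

(* Defs.v *)
From Stdlib Require Import Reals Arith ClassicalEpsilon.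
Open Scope R_scope.

Definition gamma_integrand (s : R) (t : R) : R := Rpower t (s - 1) * exp (- t).

(* g is the value of the improper integral  int_0^infty t^(s-1) e^(-t) dt,
   i.e. the limit of int_u^v as u -> 0+ and v -> +infty. *)
Definition is_gamma_integral (s g : R) : Prop :=
  (forall u v, 0 < u -> u <= v -> inhabited (Riemann_integrable (gamma_integrand s) u v)) /\
  (forall eps, 0 < eps -> exists delta, 0 < delta /\ exists M,
     forall u v (pr : Riemann_integrable (gamma_integrand s) u v),
       0 < u -> u < delta -> M < v -> u <= v ->
       Rabs (RiemannInt pr - g) < eps).

(* Euler's Gamma function (meaningful for s > 0). *)
Definition Gamma (s : R) : R := epsilon (inhabits 0) (is_gamma_integral s).

Definition Beta (p q : R) : R := Gamma p * Gamma q / Gamma (p + q).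

Definition beta_integrand (p q : R) (t : R) : R :=
  Rpower t (p - 1) * Rpower (1 - t) (q - 1).

(* l is the (possibly improper at 0) integral int_0^y t^(p-1)(1-t)^(q-1) dt,
   i.e. the limit of int_u^y as u -> 0+ (used for 0 < y < 1). *)
Definition is_inc_beta_integral (p q y l : R) : Prop :=
  (forall u, 0 < u -> u <= y -> inhabited (Riemann_integrable (beta_integrand p q) u y)) /\
  (forall eps, 0 < eps -> exists delta, 0 < delta /\
     forall u (pr : Riemann_integrable (beta_integrand p q) u y),
       0 < u -> u < delta -> u <= y ->
       Rabs (RiemannInt pr - l) < eps).

Definition inc_beta_integral (p q y : R) : R :=
  epsilon (inhabits 0) (is_inc_beta_integral p q y).

Definition reg_inc_beta (y p q : R) : R := inc_beta_integral p q y / Beta p q.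

(* Cumulative noncentral beta distribution
   B_{p,q}(x,y) = e^{-x/2} sum_{j>=0} (x/2)^j / j! * I_y(p+j,q). *)
Definition ncbeta_term (p q x y : R) (j : nat) : R :=
  / INR (fact j) * (x / 2) ^ j * reg_inc_beta y (p + INR j) q.

Definition ncbeta (p q x y : R) : R :=
  exp (- (x / 2)) * epsilon (inhabits 0) (infinite_sum (ncbeta_term p q x y)).

(* Main.v *)
Require Import Defs.
From Stdlib Require Import Reals Arith Lra Lia ClassicalEpsilon ZArith.
From Coquelicot Require Import Coquelicot.
Open Scope R_scope.


Lemma exp_le' x y : x <= y -> exp x <= exp y.
Proof. intros H; destruct (Rle_lt_or_eq_dec _ _ H) as [H1|H1].
  left; now apply exp_increasing. now subst; right. Qed.

Lemma ln_le_sub1 y : 0 < y -> ln y <= y - 1.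
Proof. intros Hy. rewrite <- (ln_exp (y - 1)).
  destruct (Rle_lt_or_eq_dec _ _ (exp_ineq1_le (y-1))) as [H|H].
  left; apply ln_increasing; lra. right; f_equal; lra. Qed.

Lemma pw_bound a t : 0 < a -> 0 < t -> exp (a * ln t - t) <= exp (a * ln a - a).
Proof. intros Ha Ht. apply exp_le'.
  assert (H := ln_le_sub1 (t / a) ltac:(apply Rdiv_lt_0_compat; lra)).
  rewrite ln_div in H by lra.
  assert (a * (ln t - ln a) <= a * (t / a - 1)) by (apply Rmult_le_compat_l; lra).
  replace (a * (t / a - 1)) with (t - a) in H0 by (field; lra). nra. Qed.

Lemma exp_m1 a t : 0 < t -> exp ((a - 1) * ln t) = exp (a * ln t) / t.
Proof. intros Ht. replace ((a - 1) * ln t) with (a * ln t + - ln t) by ring.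
  rewrite exp_plus, exp_Ropp, exp_ln by lra. field. lra. Qed.

Lemma gi_cont s t : 0 < t -> continuous (gamma_integrand s) t.
Proof. intros Ht. apply (ex_derive_continuous (gamma_integrand s)). unfold gamma_integrand, Rpower.
  auto_derive. lra. Qed.

Lemma gi_pos s t : 0 < gamma_integrand s t.
Proof. unfold gamma_integrand, Rpower. apply Rmult_lt_0_compat; apply exp_pos. Qed.

Definition GF s u v := RInt (gamma_integrand s) u v.

Lemma GF_ex s u v : 0 < u -> 0 < v -> ex_RInt (gamma_integrand s) u v.
Proof. intros Hu Hv. apply (ex_RInt_continuous (V:=R_CompleteNormedModule)). intros z Hz. apply gi_cont.
  assert (0 < Rmin u v) by (apply Rmin_glb_lt; lra). lra. Qed.

Lemma GF_chasles s u v w : 0 < u -> 0 < v -> 0 < w -> GF s u v + GF s v w = GF s u w.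
Proof. intros. unfold GF. apply (RInt_Chasles (gamma_integrand s)); now apply GF_ex. Qed.

Lemma GF_nonneg s u v : 0 < u <= v -> 0 <= GF s u v.
Proof. intros. apply RInt_ge_0; try lra. apply GF_ex; lra.
  intros; left; apply gi_pos. Qed.

Lemma minus_R (a b : R) : minus a b = a - b.
Proof. reflexivity. Qed.

Ltac toR := match goal with |- @eq _ ?a ?b => change (@eq R a b) end.

Lemma RInt_scal_R (f : R -> R) a b k : ex_RInt f a b ->
  RInt (fun x => k * f x) a b = k * RInt f a b.
Proof. intros H. exact (RInt_scal f a b k H). Qed.

Lemma RInt_minus_R (f g : R -> R) a b : ex_RInt f a b -> ex_RInt g a b ->
  RInt (fun x => f x - g x) a b = RInt f a b - RInt g a b.
Proof. intros H1 H2. exact (RInt_minus f g a b H1 H2). Qed.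

Lemma cont_pos_helper (f : R -> R) u v :
  0 < u -> 0 < v -> (forall t, 0 < t -> ex_derive f t) ->
  forall z, Rmin u v <= z <= Rmax u v -> continuous f z.
Proof. intros Hu Hv Hd z Hz. apply (ex_derive_continuous f). apply Hd.
  assert (0 < Rmin u v) by (apply Rmin_glb_lt; lra). lra. Qed.

Lemma RInt_pow_prim s u v : 0 < s -> 0 < u -> 0 < v ->
  RInt (fun t => exp ((s - 1) * ln t)) u v = (exp (s * ln v) - exp (s * ln u)) / s.
Proof. intros Hs Hu Hv.
  apply is_RInt_unique.
  replace ((exp (s * ln v) - exp (s * ln u)) / s) with
    (minus ((fun t => exp (s * ln t) / s) v) ((fun t => exp (s * ln t) / s) u))
    by (rewrite minus_R; toR; field; repeat split; lra).
  apply (is_RInt_derive (V:=R_CompleteNormedModule) (fun t => exp (s * ln t) / s)).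
  - intros x Hx. assert (0 < Rmin u v) by (apply Rmin_glb_lt; lra).
    auto_derive. lra. rewrite exp_m1 by lra. field. lra.
  - apply cont_pos_helper; auto. intros; auto_derive; lra.
Qed.

Lemma RInt_inv2 u v : 0 < u -> 0 < v -> RInt (fun t => / (t * t)) u v = / u - / v.
Proof. intros Hu Hv. apply is_RInt_unique.
  replace (/ u - / v) with (minus ((fun t => - / t) v) ((fun t => - / t) u))
    by (rewrite minus_R; toR; field; repeat split; lra).
  apply (is_RInt_derive (V:=R_CompleteNormedModule) (fun t => - / t)).
  - intros x Hx. assert (0 < Rmin u v) by (apply Rmin_glb_lt; lra).
    auto_derive. lra. field. lra.
  - apply cont_pos_helper; auto. intros t Ht; auto_derive; try intro; nra.
Qed.

Lemma GF_bound s : 0 < s -> exists B, forall u v, 0 < u <= v -> GF s u v <= B.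
Proof. intros Hs.
  set (K := exp ((s + 1) * ln (s + 1) - (s + 1))).
  exists (/ s + K). intros u v Huv.
  set (u' := Rmin u 1). set (v' := Rmax v 1).
  assert (Hu' : 0 < u' <= 1) by (unfold u'; split; [apply Rmin_glb_lt; lra | apply Rmin_r]).
  assert (Hv' : 1 <= v') by (unfold v'; apply Rmax_r).
  assert (Hu'u : u' <= u) by apply Rmin_l.
  assert (Hvv' : v <= v') by apply Rmax_l.
  assert (H1 : GF s u v <= GF s u' v').
  { rewrite <- (GF_chasles s u' u v') by lra. rewrite <- (GF_chasles s u v v') by lra.
    assert (0 <= GF s u' u) by (apply GF_nonneg; lra).
    assert (0 <= GF s v v') by (apply GF_nonneg; lra). lra. }
  rewrite <- (GF_chasles s u' 1 v') in H1 by lra.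
  assert (H2 : GF s u' 1 <= / s).
  { unfold GF. eapply Rle_trans.
    apply (RInt_le _ (fun t => exp ((s - 1) * ln t))); try lra.
    apply GF_ex; lra.
    apply (ex_RInt_continuous (V:=R_CompleteNormedModule)). apply cont_pos_helper; try lra.
    intros t Ht; auto_derive; try intro; nra.
    intros x Hx. unfold gamma_integrand, Rpower.
    rewrite <- (Rmult_1_r (exp ((s-1) * ln x))) at 2.
    apply Rmult_le_compat_l. left; apply exp_pos.
    rewrite <- exp_0. apply exp_le'; lra.
    rewrite RInt_pow_prim by lra. rewrite ln_1, Rmult_0_r, exp_0.
    assert (0 < exp (s * ln u')) by apply exp_pos.
    assert (0 < / s) by (apply Rinv_0_lt_compat; lra). unfold Rdiv. nra. }
  assert (H3 : GF s 1 v' <= K).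
  { unfold GF. eapply Rle_trans.
    apply (RInt_le _ (fun t => K * / (t * t))); try lra.
    apply GF_ex; lra.
    apply (ex_RInt_continuous (V:=R_CompleteNormedModule)). apply cont_pos_helper; try lra.
    intros t Ht; auto_derive; try intro; nra.
    intros x Hx. unfold gamma_integrand, Rpower.
    assert (E : exp ((s - 1) * ln x) * exp (- x) = exp ((s + 1) * ln x - x) * / (x * x)).
    { replace ((s + 1) * ln x - x) with ((s - 1) * ln x + - x + ln x + ln x) by ring.
      rewrite !exp_plus, exp_ln by lra. field. lra. }
    rewrite E. apply Rmult_le_compat_r. left; apply Rinv_0_lt_compat; nra.
    apply pw_bound; lra.
    rewrite RInt_scal_R.
    rewrite RInt_inv2 by lra.
    assert (0 < K) by apply exp_pos.
    assert (0 < / v') by (apply Rinv_0_lt_compat; lra). rewrite Rinv_1. nra.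
    apply (ex_RInt_continuous (V:=R_CompleteNormedModule)). apply cont_pos_helper; try lra.
    intros t Ht; auto_derive; try intro; nra. }
  lra.
Qed.

Definition lim2 (F : R -> R -> R) (g : R) := forall eps, 0 < eps ->
  exists delta, 0 < delta /\ exists M, forall u v, 0 < u -> u < delta -> M < v -> u <= v ->
  Rabs (F u v - g) < eps.

Lemma eq_of_close a b : (forall eps, 0 < eps -> Rabs (a - b) < eps) -> a = b.
Proof. intros H. destruct (Req_dec a b) as [|Hn]; auto.
  assert (0 < Rabs (a - b)) by (apply Rabs_pos_lt; lra).
  specialize (H _ H0). lra. Qed.

Lemma lim2_unique F g1 g2 : lim2 F g1 -> lim2 F g2 -> g1 = g2.
Proof. intros H1 H2. apply eq_of_close. intros eps He.
  destruct (H1 (eps/2)) as [d1 [Hd1 [M1 HM1]]]; try lra.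
  destruct (H2 (eps/2)) as [d2 [Hd2 [M2 HM2]]]; try lra.
  set (u := Rmin d1 d2 / 2).
  assert (0 < Rmin d1 d2) by (apply Rmin_glb_lt; lra).
  assert (Rmin d1 d2 <= d1) by apply Rmin_l. assert (Rmin d1 d2 <= d2) by apply Rmin_r.
  set (v := Rmax (Rmax M1 M2) u + 1).
  assert (Rmax M1 M2 <= Rmax (Rmax M1 M2) u) by apply Rmax_l.
  assert (u <= Rmax (Rmax M1 M2) u) by apply Rmax_r.
  assert (M1 <= Rmax M1 M2) by apply Rmax_l. assert (M2 <= Rmax M1 M2) by apply Rmax_r.
  specialize (HM1 u v). specialize (HM2 u v).
  unfold v in *; unfold u in *.
  assert (A1 := HM1 ltac:(lra) ltac:(lra) ltac:(lra) ltac:(lra)).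
  assert (A2 := HM2 ltac:(lra) ltac:(lra) ltac:(lra) ltac:(lra)).
  set (w := F (Rmin d1 d2 / 2) (Rmax (Rmax M1 M2) (Rmin d1 d2 / 2) + 1)) in *.
  replace (g1 - g2) with (- (w - g1) + (w - g2)) by ring.
  eapply Rle_lt_trans. apply Rabs_triang. rewrite Rabs_Ropp. lra. Qed.

Lemma gamma_iff s g : is_gamma_integral s g <-> lim2 (GF s) g.
Proof. split.
  - intros [_ H] eps He. destruct (H eps He) as [d [Hd [M HM]]].
    exists d; split; auto. exists M. intros u v Hu Hud HMv Huv.
    assert (pr := ex_RInt_Reals_0 _ _ _ (GF_ex s u v Hu ltac:(lra))).
    unfold GF. rewrite (RInt_Reals _ _ _ pr). now apply HM.
  - intros H. split.
    + intros u v Hu Huv. constructor. apply ex_RInt_Reals_0. apply GF_ex; lra.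
    + intros eps He. destruct (H eps He) as [d [Hd [M HM]]].
      exists d; split; auto. exists M. intros u v pr Hu Hud HMv Huv.
      rewrite <- RInt_Reals. now apply HM.
Qed.

Lemma GF_lim s : 0 < s -> exists g, lim2 (GF s) g /\ forall u v, 0 < u <= v -> GF s u v <= g.
Proof. intros Hs. destruct (GF_bound s Hs) as [B HB].
  set (E := fun z => exists u v, 0 < u <= v /\ z = GF s u v).
  assert (Hb : bound E) by (exists B; intros z [u [v [Huv ->]]]; now apply HB).
  assert (Hne : exists z, E z) by (exists (GF s 1 1); exists 1, 1; split; auto; lra).
  destruct (completeness E Hb Hne) as [g [Hub Hlub]].
  exists g. split.
  - intros eps He.
    assert (exists u0 v0, 0 < u0 <= v0 /\ g - eps < GF s u0 v0) as [u0 [v0 [Huv0 Hgt]]].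
    { apply Classical_Prop.NNPP. intros Hn.
      assert (is_upper_bound E (g - eps)).
      { intros z [u [v [Huv ->]]]. apply Rnot_lt_le. intros Hl. apply Hn. exists u, v; auto. }
      specialize (Hlub _ H). lra. }
    exists u0. split; [lra|]. exists v0. intros u v Hu Hu0 Hv0 Huv.
    assert (Hle : GF s u v <= g) by (apply Hub; exists u, v; split; auto).
    rewrite <- (GF_chasles s u u0 v) by lra. rewrite <- (GF_chasles s u0 v0 v) by lra.
    assert (0 <= GF s u u0) by (apply GF_nonneg; lra).
    assert (0 <= GF s v0 v) by (apply GF_nonneg; lra).
    rewrite <- (GF_chasles s u u0 v) in Hle by lra. rewrite <- (GF_chasles s u0 v0 v) in Hle by lra.
    apply Rabs_def1; lra.
  - intros u v Huv. apply Hub. exists u, v; auto.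
Qed.

Lemma Gamma_spec s : 0 < s -> lim2 (GF s) (Gamma s) /\ forall u v, 0 < u <= v -> GF s u v <= Gamma s.
Proof. intros Hs. destruct (GF_lim s Hs) as [g [Hg Hle]].
  assert (HG : is_gamma_integral s (Gamma s)).
  { unfold Gamma. apply epsilon_spec. exists g. now apply gamma_iff. }
  apply gamma_iff in HG. rewrite (lim2_unique _ _ _ HG Hg). auto. Qed.

Lemma Gamma_pos s : 0 < s -> 0 < Gamma s.
Proof. intros Hs. destruct (Gamma_spec s Hs) as [_ H].
  assert (0 < GF s 1 2).
  { unfold GF. apply RInt_gt_0; try lra. intros; apply gi_pos.
    intros; apply gi_cont; lra. }
  specialize (H 1 2 ltac:(lra)). lra. Qed.

Lemma lim2_transform (F1 F2 : R -> R -> R) (b1 b2 : R -> R) c g :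
  0 <= c -> lim2 F1 g ->
  (forall u v, 0 < u -> u <= v -> F2 u v = c * F1 u v + b1 u - b2 v) ->
  (forall eps, 0 < eps -> exists d, 0 < d /\ forall u, 0 < u -> u < d -> Rabs (b1 u) < eps) ->
  (forall eps, 0 < eps -> exists M, forall v, M < v -> Rabs (b2 v) < eps) ->
  lim2 F2 (c * g).
Proof. intros Hc H1 HF Hb1 Hb2 eps He.
  set (e := eps / (c + 2)).
  assert (He' : 0 < e) by (unfold e; apply Rdiv_lt_0_compat; lra).
  destruct (H1 e He') as [d [Hd [M HM]]].
  destruct (Hb1 e He') as [d1 [Hd1 Hd1']].
  destruct (Hb2 e He') as [M2 HM2].
  exists (Rmin d d1). split. apply Rmin_glb_lt; lra.
  exists (Rmax M M2). intros u v Hu Hud HMv Huv.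
  assert (Rmin d d1 <= d) by apply Rmin_l. assert (Rmin d d1 <= d1) by apply Rmin_r.
  assert (M <= Rmax M M2) by apply Rmax_l. assert (M2 <= Rmax M M2) by apply Rmax_r.
  rewrite HF by lra.
  assert (A := HM u v Hu ltac:(lra) ltac:(lra) Huv).
  assert (B1 := Hd1' u Hu ltac:(lra)). assert (B2 := HM2 v ltac:(lra)).
  replace (c * F1 u v + b1 u - b2 v - c * g) with (c * (F1 u v - g) + (b1 u - b2 v)) by ring.
  eapply Rle_lt_trans. apply Rabs_triang. rewrite Rabs_mult, (Rabs_pos_eq c) by lra.
  assert (Rabs (b1 u - b2 v) <= Rabs (b1 u) + Rabs (b2 v)).
  { unfold Rminus. eapply Rle_trans. apply Rabs_triang. rewrite Rabs_Ropp. lra. }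
  assert (c * Rabs (F1 u v - g) <= c * e) by (apply Rmult_le_compat_l; lra).
  assert (eps = c * e + 2 * e) by (unfold e; field; lra). lra. Qed.

Lemma GF_rec s u v : 0 < s -> 0 < u -> 0 < v ->
  GF (s + 1) u v = s * GF s u v + exp (s * ln u) * exp (- u) - exp (s * ln v) * exp (- v).
Proof. intros Hs Hu Hv.
  assert (E : RInt (fun t => gamma_integrand (s + 1) t - s * gamma_integrand s t) u v
            = exp (s * ln u) * exp (- u) - exp (s * ln v) * exp (- v)).
  { apply is_RInt_unique.
    replace (exp (s * ln u) * exp (- u) - exp (s * ln v) * exp (- v)) with
      (minus ((fun t => - (exp (s * ln t) * exp (- t))) v) ((fun t => - (exp (s * ln t) * exp (- t))) u))
      by (rewrite minus_R; toR; ring).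
    apply (is_RInt_derive (V:=R_CompleteNormedModule) (fun t => - (exp (s * ln t) * exp (- t)))).
    - intros x Hx. assert (0 < Rmin u v) by (apply Rmin_glb_lt; lra).
      auto_derive. lra. unfold gamma_integrand, Rpower.
      replace (s + 1 - 1) with s by ring. rewrite exp_m1 by lra. field. lra.
    - intros z Hz. assert (0 < Rmin u v) by (apply Rmin_glb_lt; lra).
      apply (ex_derive_continuous (fun t => gamma_integrand (s + 1) t - s * gamma_integrand s t)).
      unfold gamma_integrand, Rpower. auto_derive. lra. }
  assert (X1 := GF_ex (s + 1) u v Hu Hv). assert (X2 := GF_ex s u v Hu Hv).
  assert (X3 : ex_RInt (fun t => s * gamma_integrand s t) u v)
    by exact (ex_RInt_scal (V:=R_NormedModule) _ _ _ s X2).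
  rewrite (RInt_minus_R _ _ _ _ X1 X3) in E.
  rewrite (RInt_scal_R _ _ _ _ X2) in E.
  unfold GF. lra.
Qed.

Lemma Gamma_rec s : 0 < s -> Gamma (s + 1) = s * Gamma s.
Proof. intros Hs.
  destruct (Gamma_spec s Hs) as [H1 _]. destruct (Gamma_spec (s + 1) ltac:(lra)) as [H2 _].
  apply (lim2_unique (GF (s + 1))); auto.
  apply (lim2_transform (GF s) _ (fun u => exp (s * ln u) * exp (- u))
                                 (fun v => exp (s * ln v) * exp (- v))); try lra; auto.
  - intros u v Hu Huv. apply GF_rec; lra.
  - intros eps He. exists (exp (ln eps / s)). split. apply exp_pos.
    intros u Hu Hud. rewrite Rabs_pos_eq by (left; apply Rmult_lt_0_compat; apply exp_pos).
    assert (ln u < ln eps / s).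
    { rewrite <- (ln_exp (ln eps / s)). apply ln_increasing; auto. }
    assert (s * ln u < ln eps).
    { apply (Rmult_lt_compat_l s) in H; auto. replace (s * (ln eps / s)) with (ln eps) in H by (field; lra). auto. }
    assert (exp (- u) <= 1) by (rewrite <- exp_0; apply exp_le'; lra).
    assert (exp (s * ln u) < eps) by (rewrite <- (exp_ln eps) by lra; apply exp_increasing; auto).
    assert (0 < exp (s * ln u)) by apply exp_pos.
    assert (0 < exp (- u)) by apply exp_pos.
    apply (Rle_lt_trans _ (exp (s * ln u) * 1)). apply Rmult_le_compat_l; lra. lra.
  - intros eps He. set (K := exp ((s + 1) * ln (s + 1) - (s + 1))).
    assert (HK : 0 < K) by apply exp_pos.
    exists (K / eps). intros v Hv.
    assert (0 < K / eps) by (apply Rdiv_lt_0_compat; lra).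
    rewrite Rabs_pos_eq by (left; apply Rmult_lt_0_compat; apply exp_pos).
    assert (E : exp (s * ln v) * exp (- v) = exp ((s + 1) * ln v - v) / v).
    { replace ((s + 1) * ln v - v) with (s * ln v + - v + ln v) by ring.
      rewrite !exp_plus, exp_ln by lra. field. lra. }
    rewrite E. assert (B := pw_bound (s + 1) v ltac:(lra) ltac:(lra)). fold K in B.
    apply (Rle_lt_trans _ (K / v)). unfold Rdiv. apply Rmult_le_compat_r; auto.
    left; apply Rinv_0_lt_compat; lra.
    apply (Rmult_lt_reg_r v); try lra. unfold Rdiv. rewrite Rmult_assoc, Rinv_l by lra.
    apply (Rmult_lt_compat_r eps) in Hv; auto. unfold Rdiv in Hv.
    rewrite Rmult_assoc, Rinv_l in Hv by lra. lra.
Qed.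

Definition lim1 (h : R -> R) (y l : R) := forall eps, 0 < eps ->
  exists delta, 0 < delta /\ forall u, 0 < u -> u < delta -> u <= y -> Rabs (h u - l) < eps.

Lemma lim1_unique h y l1 l2 : 0 < y -> lim1 h y l1 -> lim1 h y l2 -> l1 = l2.
Proof. intros Hy H1 H2. apply eq_of_close. intros eps He.
  destruct (H1 (eps/2)) as [d1 [Hd1 A1]]; try lra.
  destruct (H2 (eps/2)) as [d2 [Hd2 A2]]; try lra.
  set (u := Rmin (Rmin d1 d2) y / 2).
  assert (0 < Rmin (Rmin d1 d2) y) by (repeat apply Rmin_glb_lt; lra).
  assert (Rmin (Rmin d1 d2) y <= Rmin d1 d2) by apply Rmin_l.
  assert (Rmin (Rmin d1 d2) y <= y) by apply Rmin_r.
  assert (Rmin d1 d2 <= d1) by apply Rmin_l. assert (Rmin d1 d2 <= d2) by apply Rmin_r.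
  specialize (A1 u ltac:(unfold u; lra) ltac:(unfold u; lra) ltac:(unfold u; lra)).
  specialize (A2 u ltac:(unfold u; lra) ltac:(unfold u; lra) ltac:(unfold u; lra)).
  replace (l1 - l2) with (- (h u - l1) + (h u - l2)) by ring.
  eapply Rle_lt_trans. apply Rabs_triang. rewrite Rabs_Ropp. lra. Qed.

Lemma lim1_lin h1 h2 y l1 l2 a b : lim1 h1 y l1 -> lim1 h2 y l2 ->
  lim1 (fun u => a * h1 u + b * h2 u) y (a * l1 + b * l2).
Proof. intros H1 H2 eps He.
  set (e := eps / (Rabs a + Rabs b + 1)).
  assert (0 <= Rabs a) by apply Rabs_pos. assert (0 <= Rabs b) by apply Rabs_pos.
  assert (He' : 0 < e) by (unfold e; apply Rdiv_lt_0_compat; lra).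
  destruct (H1 e He') as [d1 [Hd1 A1]]. destruct (H2 e He') as [d2 [Hd2 A2]].
  exists (Rmin d1 d2). split. apply Rmin_glb_lt; lra.
  intros u Hu Hd Huy.
  assert (Rmin d1 d2 <= d1) by apply Rmin_l. assert (Rmin d1 d2 <= d2) by apply Rmin_r.
  specialize (A1 u Hu ltac:(lra) Huy). specialize (A2 u Hu ltac:(lra) Huy).
  replace (a * h1 u + b * h2 u - (a * l1 + b * l2)) with (a * (h1 u - l1) + b * (h2 u - l2)) by ring.
  eapply Rle_lt_trans. apply Rabs_triang. rewrite !Rabs_mult.
  assert (Rabs a * Rabs (h1 u - l1) <= Rabs a * e) by (apply Rmult_le_compat_l; lra).
  assert (Rabs b * Rabs (h2 u - l2) <= Rabs b * e) by (apply Rmult_le_compat_l; lra).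
  assert (eps = Rabs a * e + Rabs b * e + e) by (unfold e; field; lra). lra. Qed.

Lemma lim1_ext h1 h2 y l : lim1 h1 y l -> (forall u, 0 < u -> u <= y -> h1 u = h2 u) -> lim1 h2 y l.
Proof. intros H E eps He. destruct (H eps He) as [d [Hd A]]. exists d; split; auto.
  intros u Hu Hud Huy. rewrite <- E by auto. auto. Qed.

Lemma lim1_le h1 h2 y l1 l2 : 0 < y -> lim1 h1 y l1 -> lim1 h2 y l2 ->
  (forall u, 0 < u -> u <= y -> h1 u <= h2 u) -> l1 <= l2.
Proof. intros Hy H1 H2 Hle. apply Rnot_lt_le. intros Hl.
  set (eps := (l1 - l2) / 2).
  destruct (H1 eps ltac:(unfold eps; lra)) as [d1 [Hd1 A1]].
  destruct (H2 eps ltac:(unfold eps; lra)) as [d2 [Hd2 A2]].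
  set (u := Rmin (Rmin d1 d2) y / 2).
  assert (0 < Rmin (Rmin d1 d2) y) by (repeat apply Rmin_glb_lt; lra).
  assert (Rmin (Rmin d1 d2) y <= Rmin d1 d2) by apply Rmin_l.
  assert (Rmin (Rmin d1 d2) y <= y) by apply Rmin_r.
  assert (Rmin d1 d2 <= d1) by apply Rmin_l. assert (Rmin d1 d2 <= d2) by apply Rmin_r.
  specialize (A1 u ltac:(unfold u; lra) ltac:(unfold u; lra) ltac:(unfold u; lra)).
  specialize (A2 u ltac:(unfold u; lra) ltac:(unfold u; lra) ltac:(unfold u; lra)).
  specialize (Hle u ltac:(unfold u; lra) ltac:(unfold u; lra)).
  apply Rabs_def2 in A1. apply Rabs_def2 in A2. unfold eps in *. lra. Qed.

Lemma lim1_const_minus (G : R -> R) y C :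
  (forall eps, 0 < eps -> exists d, 0 < d /\ forall u, 0 < u -> u < d -> Rabs (G u) < eps) ->
  lim1 (fun u => C - G u) y C.
Proof. intros H eps He. destruct (H eps He) as [d [Hd A]]. exists d; split; auto.
  intros u Hu Hud _. replace (C - G u - C) with (- G u) by ring. rewrite Rabs_Ropp; auto. Qed.

Lemma small_pow p : 0 < p ->
  forall eps, 0 < eps -> exists d, 0 < d /\ forall u, 0 < u -> u < d -> exp (p * ln u) < eps.
Proof. intros Hp eps He. exists (exp (ln eps / p)). split. apply exp_pos.
  intros u Hu Hud.
  assert (ln u < ln eps / p).
  { rewrite <- (ln_exp (ln eps / p)). apply ln_increasing; auto. }
  assert (p * ln u < ln eps).
  { apply (Rmult_lt_compat_l p) in H; auto. replace (p * (ln eps / p)) with (ln eps) in H by (field; lra). auto. }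
  rewrite <- (exp_ln eps) by lra. apply exp_increasing; auto. Qed.

Lemma bi_cont p q t : 0 < t < 1 -> continuous (beta_integrand p q) t.
Proof. intros Ht. apply (ex_derive_continuous (beta_integrand p q)).
  unfold beta_integrand, Rpower. auto_derive. lra. Qed.

Lemma bi_pos p q t : 0 < beta_integrand p q t.
Proof. unfold beta_integrand, Rpower. apply Rmult_lt_0_compat; apply exp_pos. Qed.

Definition BF p q y u := RInt (beta_integrand p q) u y.

Lemma BI_ex p q u v : 0 < u < 1 -> 0 < v < 1 -> ex_RInt (beta_integrand p q) u v.
Proof. intros Hu Hv. apply (ex_RInt_continuous (V:=R_CompleteNormedModule)). intros z Hz. apply bi_cont.
  assert (0 < Rmin u v) by (apply Rmin_glb_lt; lra).
  assert (Rmax u v < 1) by (apply Rmax_lub_lt; lra). lra. Qed.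

Lemma BI_chasles p q u v w : 0 < u < 1 -> 0 < v < 1 -> 0 < w < 1 ->
  RInt (beta_integrand p q) u v + RInt (beta_integrand p q) v w = RInt (beta_integrand p q) u w.
Proof. intros. apply (RInt_Chasles (beta_integrand p q)); now apply BI_ex. Qed.

Lemma BI_nonneg p q u v : 0 < u -> u <= v -> v < 1 -> 0 <= RInt (beta_integrand p q) u v.
Proof. intros. apply RInt_ge_0; auto. apply BI_ex; lra. intros; left; apply bi_pos. Qed.

Lemma BF_bound p q y : 0 < p -> 0 < y < 1 -> exists B, forall u, 0 < u <= y -> BF p q y u <= B.
Proof. intros Hp Hy.
  set (Mq := exp (Rabs (q - 1) * - ln (1 - y))).
  exists (Mq * (exp (p * ln y) / p)). intros u Hu. unfold BF.
  eapply Rle_trans.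
  apply (RInt_le _ (fun t => Mq * exp ((p - 1) * ln t))); try lra.
  apply BI_ex; lra.
  apply (ex_RInt_continuous (V:=R_CompleteNormedModule)). apply cont_pos_helper; try lra.
  intros t Ht; auto_derive; lra.
  intros t Ht. unfold beta_integrand, Rpower. rewrite Rmult_comm.
  apply Rmult_le_compat_r. left; apply exp_pos. apply exp_le'.
  assert (ln (1 - y) <= ln (1 - t)) by (apply Rlt_le, ln_increasing; lra).
  assert (ln (1 - t) <= 0) by (rewrite <- ln_1; apply Rlt_le, ln_increasing; lra).
  eapply Rle_trans. apply Rle_abs. rewrite Rabs_mult.
  rewrite (Rabs_left1 (ln (1 - t))) by lra.
  apply Rmult_le_compat_l. apply Rabs_pos. lra.
  assert (X : ex_RInt (fun t => exp ((p - 1) * ln t)) u y).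
  { apply (ex_RInt_continuous (V:=R_CompleteNormedModule)). apply cont_pos_helper; try lra.
    intros t Ht; auto_derive; lra. }
  rewrite (RInt_scal_R _ _ _ _ X). rewrite RInt_pow_prim by lra.
  apply Rmult_le_compat_l. left; apply exp_pos.
  assert (0 < exp (p * ln u)) by apply exp_pos.
  assert (0 < / p) by (apply Rinv_0_lt_compat; lra). unfold Rdiv. nra.
Qed.

Lemma beta_iff p q y l : 0 < y < 1 -> is_inc_beta_integral p q y l <-> lim1 (BF p q y) y l.
Proof. intros Hy. split.
  - intros [_ H] eps He. destruct (H eps He) as [d [Hd HM]].
    exists d; split; auto. intros u Hu Hud Huy.
    assert (pr := ex_RInt_Reals_0 _ _ _ (BI_ex p q u y ltac:(lra) ltac:(lra))).
    unfold BF. rewrite (RInt_Reals _ _ _ pr). now apply HM.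
  - intros H. split.
    + intros u Hu Huv. constructor. apply ex_RInt_Reals_0. apply BI_ex; lra.
    + intros eps He. destruct (H eps He) as [d [Hd HM]].
      exists d; split; auto. intros u pr Hu Hud Huy.
      rewrite <- RInt_Reals. now apply HM.
Qed.

Lemma BF_lim p q y : 0 < p -> 0 < y < 1 ->
  exists l, lim1 (BF p q y) y l /\ forall u, 0 < u <= y -> BF p q y u <= l.
Proof. intros Hp Hy. destruct (BF_bound p q y Hp Hy) as [B HB].
  set (E := fun z => exists u, 0 < u <= y /\ z = BF p q y u).
  assert (Hb : bound E) by (exists B; intros z [u [Hu ->]]; now apply HB).
  assert (Hne : exists z, E z) by (exists (BF p q y y); exists y; split; auto; lra).
  destruct (completeness E Hb Hne) as [g [Hub Hlub]].
  exists g. split.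
  - intros eps He.
    assert (exists u0, 0 < u0 <= y /\ g - eps < BF p q y u0) as [u0 [Hu0 Hgt]].
    { apply Classical_Prop.NNPP. intros Hn.
      assert (is_upper_bound E (g - eps)).
      { intros z [u [Hu ->]]. apply Rnot_lt_le. intros Hl. apply Hn. exists u; auto. }
      specialize (Hlub _ H). lra. }
    exists u0. split; [lra|]. intros u Hu Hu0' Huy.
    assert (Hle : BF p q y u <= g) by (apply Hub; exists u; split; auto).
    unfold BF in *. assert (EE := BI_chasles p q u u0 y ltac:(lra) ltac:(lra) ltac:(lra)).
    rewrite <- EE in Hle |- *.
    assert (0 <= RInt (beta_integrand p q) u u0) by (apply BI_nonneg; lra).
    apply Rabs_def1; lra.
  - intros u Hu. apply Hub. exists u; auto.
Qed.

Lemma J_spec p q y : 0 < p -> 0 < y < 1 ->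
  lim1 (BF p q y) y (inc_beta_integral p q y) /\
  (forall u, 0 < u <= y -> BF p q y u <= inc_beta_integral p q y) /\
  0 <= inc_beta_integral p q y.
Proof. intros Hp Hy. destruct (BF_lim p q y Hp Hy) as [g [Hg Hle]].
  assert (HJ : is_inc_beta_integral p q y (inc_beta_integral p q y)).
  { unfold inc_beta_integral. apply epsilon_spec. exists g. now apply beta_iff. }
  apply beta_iff in HJ; auto. rewrite (lim1_unique _ y _ _ ltac:(lra) HJ Hg).
  split; auto. split; auto.
  specialize (Hle y ltac:(lra)). unfold BF in Hle. rewrite RInt_point in Hle. exact Hle.
Qed.

Lemma bi_succ p q t : 0 < t -> beta_integrand (p + 1) q t = t * beta_integrand p q t.
Proof. intros Ht. unfold beta_integrand, Rpower. replace (p + 1 - 1) with p by ring.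
  rewrite (exp_m1 p t) by lra. field. lra. Qed.

Lemma BF_rec p q y u : 0 < p -> 0 < q -> 0 < y < 1 -> 0 < u <= y ->
  p * BF p q y u + - (p + q) * BF (p + 1) q y u =
  exp (p * ln y) * exp (q * ln (1 - y)) - exp (p * ln u) * exp (q * ln (1 - u)).
Proof. intros Hp Hq Hy Hu.
  assert (E : RInt (fun t => p * beta_integrand p q t - (p + q) * beta_integrand (p + 1) q t) u y
     = exp (p * ln y) * exp (q * ln (1 - y)) - exp (p * ln u) * exp (q * ln (1 - u))).
  { apply is_RInt_unique.
    replace (exp (p * ln y) * exp (q * ln (1 - y)) - exp (p * ln u) * exp (q * ln (1 - u))) with
      (minus ((fun t => exp (p * ln t) * exp (q * ln (1 - t))) y)
             ((fun t => exp (p * ln t) * exp (q * ln (1 - t))) u))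
      by (rewrite minus_R; toR; ring).
    apply (is_RInt_derive (V:=R_CompleteNormedModule) (fun t => exp (p * ln t) * exp (q * ln (1 - t)))).
    - intros x Hx. assert (Rmin u y = u) by (apply Rmin_left; lra).
      assert (Rmax u y = y) by (apply Rmax_right; lra).
      auto_derive. lra. rewrite bi_succ by lra. unfold beta_integrand, Rpower.
      rewrite (exp_m1 p x) by lra. rewrite (exp_m1 q (1 - x)) by lra. replace (1 + - x) with (1 - x) by ring. field. split; lra.
    - intros z Hz. assert (Rmin u y = u) by (apply Rmin_left; lra).
      assert (Rmax u y = y) by (apply Rmax_right; lra).
      apply (ex_derive_continuous (fun t => p * beta_integrand p q t - (p + q) * beta_integrand (p + 1) q t)).
      unfold beta_integrand, Rpower. auto_derive. lra. }
  assert (X1 := BI_ex p q u y ltac:(lra) ltac:(lra)).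
  assert (X2 := BI_ex (p + 1) q u y ltac:(lra) ltac:(lra)).
  assert (X3 : ex_RInt (fun t => p * beta_integrand p q t) u y)
    by exact (ex_RInt_scal (V:=R_NormedModule) _ _ _ p X1).
  assert (X4 : ex_RInt (fun t => (p + q) * beta_integrand (p + 1) q t) u y)
    by exact (ex_RInt_scal (V:=R_NormedModule) _ _ _ (p + q) X2).
  rewrite (RInt_minus_R _ _ _ _ X3 X4) in E.
  rewrite (RInt_scal_R _ _ _ _ X1), (RInt_scal_R _ _ _ _ X2) in E.
  unfold BF. lra.
Qed.

Definition J p q y := inc_beta_integral p q y.

Lemma J_rec p q y : 0 < p -> 0 < q -> 0 < y < 1 ->
  p * J p q y - (p + q) * J (p + 1) q y = exp (p * ln y) * exp (q * ln (1 - y)).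
Proof. intros Hp Hq Hy.
  destruct (J_spec p q y Hp Hy) as [H1 _]. destruct (J_spec (p + 1) q y ltac:(lra) Hy) as [H2 _].
  assert (L := lim1_lin _ _ _ _ _ p (- (p + q)) H1 H2).
  assert (L2 : lim1 (fun u => exp (p * ln y) * exp (q * ln (1 - y)) - exp (p * ln u) * exp (q * ln (1 - u))) y
                 (exp (p * ln y) * exp (q * ln (1 - y)))).
  { apply lim1_const_minus. intros eps He. destruct (small_pow p Hp eps He) as [d [Hd A]].
    exists (Rmin d 1). split. apply Rmin_glb_lt; lra. intros u Hu Hud.
    assert (Rmin d 1 <= d) by apply Rmin_l. assert (Rmin d 1 <= 1) by apply Rmin_r.
    specialize (A u Hu ltac:(lra)).
    rewrite Rabs_pos_eq by (left; apply Rmult_lt_0_compat; apply exp_pos).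
    assert (exp (q * ln (1 - u)) <= 1).
    { apply (Rle_trans _ (exp 0)); [|rewrite exp_0; lra]. apply exp_le'.
      assert (ln (1 - u) <= 0) by (rewrite <- ln_1; apply Rlt_le, ln_increasing; lra). nra. }
    assert (0 < exp (p * ln u)) by apply exp_pos.
    apply (Rle_lt_trans _ (exp (p * ln u) * 1)). apply Rmult_le_compat_l; lra. lra. }
  assert (L3 : lim1 (fun u => p * BF p q y u + - (p + q) * BF (p + 1) q y u) y
                 (exp (p * ln y) * exp (q * ln (1 - y)))).
  { apply (lim1_ext _ _ _ _ L2). intros u Hu Huy. symmetry. apply BF_rec; auto. }
  assert (U := lim1_unique _ y _ _ ltac:(lra) L L3). unfold J. lra.
Qed.

Lemma J_le p q y : 0 < p -> 0 < y < 1 -> J (p + 1) q y <= y * J p q y.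
Proof. intros Hp Hy.
  destruct (J_spec p q y Hp Hy) as [H1 _]. destruct (J_spec (p + 1) q y ltac:(lra) Hy) as [H2 _].
  assert (L := lim1_lin _ _ _ _ _ y 0 H1 H1).
  replace (y * J p q y) with (y * inc_beta_integral p q y + 0 * inc_beta_integral p q y) by (unfold J; ring).
  apply (lim1_le _ _ y _ _ ltac:(lra) H2 L).
  intros u Hu Huy. rewrite Rmult_0_l, Rplus_0_r. unfold BF.
  assert (X1 := BI_ex p q u y ltac:(lra) ltac:(lra)).
  rewrite <- (RInt_scal_R _ _ _ _ X1).
  apply RInt_le; auto. apply BI_ex; lra.
  exact (ex_RInt_scal (V:=R_NormedModule) _ _ _ y X1).
  intros t Ht. rewrite bi_succ by lra. apply Rmult_le_compat_r. left; apply bi_pos. lra.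
Qed.

Lemma J_nonneg p q y : 0 < p -> 0 < y < 1 -> 0 <= J p q y.
Proof. intros. apply (J_spec p q y); auto. Qed.

Definition Dq p q := Gamma (p + q) / (Gamma q * Gamma (p + 1)).

Lemma I_rec p q y : 0 < p -> 0 < q -> 0 < y < 1 ->
  reg_inc_beta y p q - reg_inc_beta y (p + 1) q = Dq p q * (exp (p * ln y) * exp (q * ln (1 - y))).
Proof. intros Hp Hq Hy. unfold reg_inc_beta, Beta, Dq.
  rewrite (Gamma_rec p Hp). replace (p + 1 + q) with (p + q + 1) by ring.
  rewrite (Gamma_rec (p + q)) by lra.
  assert (H := J_rec p q y Hp Hq Hy). unfold J in H.
  assert (0 < Gamma p) by (apply Gamma_pos; lra).
  assert (0 < Gamma q) by (apply Gamma_pos; lra).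
  assert (0 < Gamma (p + q)) by (apply Gamma_pos; lra).
  set (Y := exp (p * ln y) * exp (q * ln (1 - y))) in *.
  assert (E : inc_beta_integral (p + 1) q y = (p * inc_beta_integral p q y - Y) / (p + q)).
  { replace (p * inc_beta_integral p q y - Y) with ((p + q) * inc_beta_integral (p + 1) q y) by lra.
    field. lra. }
  rewrite E. field. repeat split; lra.
Qed.

Lemma I_nonneg p q y : 0 < p -> 0 < q -> 0 < y < 1 -> 0 <= reg_inc_beta y p q.
Proof. intros Hp Hq Hy. unfold reg_inc_beta, Beta.
  assert (0 < Gamma p) by (apply Gamma_pos; lra).
  assert (0 < Gamma q) by (apply Gamma_pos; lra).
  assert (0 < Gamma (p + q)) by (apply Gamma_pos; lra).
  apply Rmult_le_pos. apply J_nonneg; auto.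
  left. apply Rinv_0_lt_compat. apply Rdiv_lt_0_compat; auto. apply Rmult_lt_0_compat; auto.
Qed.

Lemma I_le p q y : 0 < p -> 0 < q -> 0 < y < 1 ->
  reg_inc_beta y (p + 1) q <= y * (p + q) / p * reg_inc_beta y p q.
Proof. intros Hp Hq Hy. unfold reg_inc_beta, Beta.
  rewrite (Gamma_rec p Hp). replace (p + 1 + q) with (p + q + 1) by ring.
  rewrite (Gamma_rec (p + q)) by lra.
  assert (H := J_le p q y Hp Hy). unfold J in H.
  assert (0 < Gamma p) by (apply Gamma_pos; lra).
  assert (0 < Gamma q) by (apply Gamma_pos; lra).
  assert (0 < Gamma (p + q)) by (apply Gamma_pos; lra).
  set (A := inc_beta_integral (p + 1) q y) in *. set (B := inc_beta_integral p q y) in *.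
  set (k := (p + q) * Gamma (p + q) / (p * Gamma p * Gamma q)).
  assert (0 < k) by (unfold k; apply Rdiv_lt_0_compat; apply Rmult_lt_0_compat; try apply Rmult_lt_0_compat; lra).
  replace (A / (p * Gamma p * Gamma q / ((p + q) * Gamma (p + q)))) with (k * A) by (unfold k; field; repeat split; lra).
  replace (y * (p + q) / p * (B / (Gamma p * Gamma q / Gamma (p + q)))) with (k * (y * B)) by (unfold k; field; repeat split; lra).
  apply Rmult_le_compat_l; lra.
Qed.

Lemma decay (c : nat -> R) N rho : (forall n, 0 <= c n) -> 0 <= rho < 1 ->
  (forall n, (N <= n)%nat -> c (S n) <= rho * c n) -> Un_cv c 0.
Proof. intros Hc Hr Hs.
  assert (G : forall m, c (N + m)%nat <= rho ^ m * c N).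
  { induction m. rewrite Nat.add_0_r. simpl; lra.
    replace (N + S m)%nat with (S (N + m)) by lia.
    eapply Rle_trans. apply Hs; lia. simpl. rewrite Rmult_assoc.
    apply Rmult_le_compat_l; lra. }
  intros eps He.
  destruct (pow_lt_1_zero rho ltac:(rewrite Rabs_pos_eq; lra) (eps / (c N + 1))) as [M HM].
  { apply Rdiv_lt_0_compat; auto. specialize (Hc N); lra. }
  exists (N + M)%nat. intros n Hn. unfold Rdist. rewrite Rminus_0_r.
  replace n with (N + (n - N))%nat by lia.
  rewrite Rabs_pos_eq by apply Hc.
  specialize (HM (n - N)%nat ltac:(lia)). rewrite Rabs_pos_eq in HM by (apply pow_le; lra).
  eapply Rle_lt_trans. apply G.
  assert (0 <= c N) by apply Hc.
  assert (0 <= rho ^ (n - N)) by (apply pow_le; lra).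
  apply (Rle_lt_trans _ (rho ^ (n - N) * (c N + 1))). nra.
  apply (Rmult_lt_compat_r (c N + 1)) in HM; try lra.
  unfold Rdiv in HM. rewrite Rmult_assoc, Rinv_l in HM by lra. lra.
Qed.

Lemma I_to0 p q y : 0 < p -> 0 < q -> 0 < y < 1 -> Un_cv (fun n => reg_inc_beta y (p + INR n) q) 0.
Proof. intros Hp Hq Hy.
  set (rho := (1 + y) / 2).
  destruct (archimed (2 * y * q / (1 - y))) as [Hz _].
  set (N := Z.to_nat (up (2 * y * q / (1 - y)))).
  assert (HN : 2 * y * q / (1 - y) <= INR N).
  { unfold N. destruct (Z_lt_le_dec (up (2 * y * q / (1 - y))) 0) as [Hl|Hl].
    - assert (0 <= 2 * y * q / (1 - y)).
      { apply Rmult_le_pos. nra. left; apply Rinv_0_lt_compat; lra. }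
      apply IZR_lt in Hl. lra.
    - rewrite INR_IZR_INZ, Z2Nat.id by lia. lra. }
  apply (decay _ N rho).
  - intros n. apply I_nonneg; auto. assert (0 <= INR n) by apply pos_INR. lra.
  - unfold rho; lra.
  - intros n Hn. rewrite S_INR. replace (p + (INR n + 1)) with (p + INR n + 1) by ring.
    assert (0 <= INR n) by apply pos_INR.
    assert (INR N <= INR n) by (apply le_INR; lia).
    eapply Rle_trans. apply I_le; auto. lra.
    apply Rmult_le_compat_r. apply I_nonneg; auto; lra.
    assert (Hpn : 0 < p + INR n) by lra.
    apply (Rmult_le_reg_r (p + INR n)); auto. unfold Rdiv. rewrite Rmult_assoc, Rinv_l by lra.
    unfold rho.
    assert (2 * y * q <= INR n * (1 - y)).
    { assert (E2 : 2 * y * q = 2 * y * q / (1 - y) * (1 - y)) by (field; lra).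
      rewrite E2. apply Rmult_le_compat_r; lra. }
    nra.
Qed.

Lemma I_series p q y : 0 < p -> 0 < q -> 0 < y < 1 ->
  infinite_sum (fun k => Dq (p + INR k) q * (exp ((p + INR k) * ln y) * exp (q * ln (1 - y))))
    (reg_inc_beta y p q).
Proof. intros Hp Hq Hy.
  assert (P : forall n, sum_f_R0 (fun k => Dq (p + INR k) q * (exp ((p + INR k) * ln y) * exp (q * ln (1 - y)))) n
                = reg_inc_beta y p q - reg_inc_beta y (p + INR (S n)) q).
  { induction n.
    - simpl sum_f_R0. replace (p + INR 0) with p by (simpl; ring).
      replace (p + INR 1) with (p + 1) by (simpl; ring).
      rewrite Rplus_0_r. rewrite <- (I_rec p q y) by auto. ring.
    - rewrite tech5. rewrite IHn. assert (0 <= INR (S n)) by apply pos_INR.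
      rewrite <- (I_rec (p + INR (S n)) q y) by (auto; lra).
      rewrite (S_INR (S n)). replace (p + (INR (S n) + 1)) with (p + INR (S n) + 1) by ring. ring. }
  intros eps He. destruct (I_to0 p q y Hp Hq Hy eps He) as [M HM].
  exists M. intros n Hn. unfold Rdist. rewrite P.
  specialize (HM (S n) ltac:(lia)). unfold Rdist in HM.
  replace (reg_inc_beta y p q - reg_inc_beta y (p + INR (S n)) q - reg_inc_beta y p q)
    with (- (reg_inc_beta y (p + INR (S n)) q - 0)) by ring.
  rewrite Rabs_Ropp. exact HM.
Qed.

Lemma isum_scal (u : nat -> R) l c : infinite_sum u l -> infinite_sum (fun n => c * u n) (c * l).
Proof. intros H. apply is_series_Reals. apply is_series_Reals in H.
  exact (is_series_scal_l (V:=R_NormedModule) c u l H). Qed.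

Lemma isum_ext (u v : nat -> R) l : (forall n, u n = v n) -> infinite_sum u l -> infinite_sum v l.
Proof. intros E H. apply is_series_Reals. apply is_series_Reals in H.
  exact (is_series_ext (V:=R_NormedModule) u v l E H). Qed.

Lemma sum_grow (w : nat -> R) N M : (forall n, 0 <= w n) -> (N <= M)%nat ->
  sum_f_R0 w N <= sum_f_R0 w M.
Proof. intros Hw H. induction H. lra. rewrite tech5. specialize (Hw (S m)). lra. Qed.

Lemma isum_partial_le (u : nat -> R) l N : (forall n, 0 <= u n) -> infinite_sum u l ->
  sum_f_R0 u N <= l.
Proof. intros Hu H. apply (growing_ineq (sum_f_R0 u)); auto.
  intros n. rewrite tech5. specialize (Hu (S n)). lra. Qed.

Lemma isum_le (u v : nat -> R) lu lv : (forall n, u n <= v n) ->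
  infinite_sum u lu -> infinite_sum v lv -> lu <= lv.
Proof. intros H Hu Hv. eapply Rle_cv_lim; [|exact Hu|exact Hv].
  intros n. apply sum_Rle. auto. Qed.

Lemma isum_shift1 (u : nat -> R) l : infinite_sum u l -> infinite_sum (fun k => u (S k)) (l - u O).
Proof. intros H. apply is_series_Reals. apply is_series_Reals in H.
  apply (is_series_incr_1 (V:=R_NormedModule)).
  unfold plus; simpl. replace (l - u O + u O) with l by ring. exact H. Qed.

Lemma isum_tail (u : nat -> R) l N : infinite_sum u l ->
  infinite_sum (fun k => u (S N + k)%nat) (l - sum_f_R0 u N).
Proof. intros H. apply is_series_Reals. apply is_series_Reals in H.
  apply (is_series_incr_n (V:=R_NormedModule)). lia.
  simpl Nat.pred. rewrite sum_n_Reals.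
  unfold plus; simpl. replace (l - sum_f_R0 u N + sum_f_R0 u N) with l by ring. exact H. Qed.

Lemma interchange (e w T : nat -> R) Ssum :
  (forall n, 0 <= e n) -> (forall n, 0 <= w n) ->
  (forall j, infinite_sum (fun k => e (j + k)%nat) (T j)) ->
  infinite_sum (fun n => e n * sum_f_R0 w n) Ssum ->
  infinite_sum (fun j => w j * T j) Ssum.
Proof. intros He Hw HT HS.
  assert (Trec : forall j, T j = e j + T (S j)).
  { intros j. assert (A := isum_shift1 _ _ (HT j)).
    assert (B : infinite_sum (fun k => e (j + S k)%nat) (T (S j))).
    { apply (isum_ext (fun k => e (S j + k)%nat)). intros k. f_equal. lia. apply HT. }
    cbv beta in A. rewrite Nat.add_0_r in A. assert (U := uniqueness_sum _ _ _ A B). lra. }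
  assert (Tnn : forall j, 0 <= T j).
  { intros j. apply (Rle_trans _ (sum_f_R0 (fun k => e (j + k)%nat) 0)).
    simpl. apply He. apply isum_partial_le; auto. }
  set (u := fun n => e n * sum_f_R0 w n).
  assert (Hu : forall n, 0 <= u n).
  { intros n. unfold u. apply Rmult_le_pos; auto. apply cond_pos_sum; auto. }
  assert (P : forall N, sum_f_R0 (fun j => w j * T j) N = sum_f_R0 u N + sum_f_R0 w N * T (S N)).
  { induction N.
    - simpl. unfold u. rewrite (Trec O). simpl. ring.
    - rewrite !tech5, IHN. unfold u. rewrite (Trec (S N)). try rewrite (tech5 w N). ring. }
  assert (Bd : forall N, sum_f_R0 w N * T (S N) <= Ssum - sum_f_R0 u N).
  { intros N. apply (isum_le (fun k => sum_f_R0 w N * e (S N + k)%nat) (fun k => u (S N + k)%nat)).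
    - intros k. unfold u. rewrite Rmult_comm. apply Rmult_le_compat_l. apply He.
      apply sum_grow; auto; lia.
    - apply isum_scal. apply HT.
    - apply isum_tail; auto. }
  intros eps Heps. destruct (HS eps Heps) as [M HM]. exists M. intros n Hn.
  specialize (HM n Hn). fold u in HM. unfold Rdist in *. rewrite P.
  assert (0 <= sum_f_R0 w n * T (S n)) by (apply Rmult_le_pos; auto; apply cond_pos_sum; auto).
  specialize (Bd n).
  assert (sum_f_R0 u n <= Ssum) by (apply isum_partial_le; auto).
  rewrite Rabs_left1 in HM by lra.
  apply Rabs_def1; lra.
Qed.

Theorem mainTheorem16 (a b lam x : R) :
  0 < a -> 0 < b -> 0 <= lam -> 0 < x < 1 ->
  exists S : R,
    infinite_sum
      (fun n : nat =>
         Gamma (a + b + INR n) / (Gamma b * Gamma (a + 1 + INR n)) * x ^ n *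
         sum_f_R0 (fun j : nat => lam ^ j / INR (fact j)) n) S /\
    exp (- lam) * Rpower x a * Rpower (1 - x) b * S = ncbeta a b (2 * lam) x.
Proof. intros Ha Hb Hl Hx.
  set (e := fun n : nat => Gamma (a + b + INR n) / (Gamma b * Gamma (a + 1 + INR n)) * x ^ n).
  set (w := fun j : nat => lam ^ j / INR (fact j)).
  set (C := Rpower x a * Rpower (1 - x) b).
  assert (HC : 0 < C) by (unfold C, Rpower; apply Rmult_lt_0_compat; apply exp_pos).
  assert (He : forall n, 0 <= e n).
  { intros n. unfold e. assert (0 <= INR n) by apply pos_INR.
    assert (0 < Gamma (a + b + INR n)) by (apply Gamma_pos; lra).
    assert (0 < Gamma b) by (apply Gamma_pos; lra).
    assert (0 < Gamma (a + 1 + INR n)) by (apply Gamma_pos; lra).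
    apply Rmult_le_pos. left; apply Rdiv_lt_0_compat; auto; apply Rmult_lt_0_compat; auto.
    apply pow_le; lra. }
  assert (Hw : forall n, 0 <= w n).
  { intros n. unfold w. apply Rmult_le_pos. apply pow_le; auto.
    left; apply Rinv_0_lt_compat, lt_0_INR, lt_O_fact. }
  set (T := fun j : nat => reg_inc_beta x (a + INR j) b / C).
  assert (HT : forall j, infinite_sum (fun k => e (j + k)%nat) (T j)).
  { intros j. assert (0 <= INR j) by apply pos_INR.
    assert (A := I_series (a + INR j) b x ltac:(lra) Hb Hx).
    apply (isum_scal _ _ (/ C)) in A. unfold T. unfold Rdiv. rewrite Rmult_comm.
    revert A. apply isum_ext. intros k.
    unfold e, Dq, C, Rpower. rewrite plus_INR.
    replace (a + INR j + INR k + b) with (a + b + (INR j + INR k)) by ring.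
    replace (a + INR j + INR k + 1) with (a + 1 + (INR j + INR k)) by ring.
    rewrite <- plus_INR. rewrite <- (Rpower_pow (j + k) x) by lra. unfold Rpower.
    rewrite plus_INR.
    replace ((a + INR j + INR k) * ln x) with (a * ln x + (INR j + INR k) * ln x) by ring.
    rewrite exp_plus. assert (0 <= INR k) by apply pos_INR. field. repeat split; apply Rgt_not_eq; try apply exp_pos; apply Gamma_pos; lra. }
  assert (HE : forall n, sum_f_R0 w n <= exp lam).
  { intros n. apply isum_partial_le; auto.
    unfold exp. destruct (exist_exp lam) as [l Hel]. simpl. unfold exp_in in Hel.
    revert Hel. apply isum_ext. intros i. unfold w. unfold Rdiv. ring. }
  assert (HS : exists S, infinite_sum (fun n => e n * sum_f_R0 w n) S).
  { assert (X : ex_series (fun n => e n * exp lam)).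
    { exists (T 0%nat * exp lam). apply is_series_Reals. rewrite Rmult_comm.
      apply (isum_ext (fun n => exp lam * e n)). intros; ring. apply isum_scal. apply (isum_ext (fun k => e (0 + k)%nat)); [intros; reflexivity | apply HT]. }
    assert (Y : ex_series (fun n => e n * sum_f_R0 w n)).
    { apply (ex_series_le (V:=R_CompleteNormedModule) (fun n => e n * sum_f_R0 w n) (fun n => e n * exp lam)); [|exact X].
      intros n. unfold norm; simpl. unfold abs; simpl.
      rewrite Rabs_pos_eq by (apply Rmult_le_pos; auto; apply cond_pos_sum; auto).
      apply Rmult_le_compat_l; auto. }
    destruct Y as [S HSS]. exists S. now apply is_series_Reals. }
  destruct HS as [S HS]. exists S. split.
  - exact HS.
  - assert (Hint := interchange e w T S He Hw HT HS).
    assert (Hnc : infinite_sum (ncbeta_term a b (2 * lam) x) (C * S)).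
    { apply (isum_scal _ _ C) in Hint. revert Hint. apply isum_ext. intros j.
      unfold ncbeta_term, w, T. replace (2 * lam / 2) with lam by field.
      field. split. apply INR_fact_neq_0. lra. }
    unfold ncbeta. replace (2 * lam / 2) with lam by field.
    assert (Hs := epsilon_spec (inhabits 0) (infinite_sum (ncbeta_term a b (2 * lam) x)) (ex_intro _ _ Hnc)).
    rewrite (uniqueness_sum _ _ _ Hs Hnc). unfold C. ring.
Qed.
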